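(* Fix integers $n\ge m\ge 0$, an integer $N_T\ge 1$, and a target state $Q$, i.e. a nonzero homogeneous polynomial of degree $n-m$ in the $N_T$ variables $a^\dagger_1,\dots,a^\dagger_{N_T}$. Suppose the target $Q$ can be generated (in the sense defined in the context) from some $N$-mode Fock input with occupation numbers $(n_1,\dots,n_N)$, $\sum_i n_i=n$, heralded by some pattern $(m_1,\dots,m_M)$ on the last $M$ modes with $\sum_j m_j=m$ (where $N-M\ge N_T$). Then there exist an integer $N'$ and a number $M'$ of heralding modes such that $Q$ can also be generated from the $N'$-mode input with exactly one photon in each of the modes $1,\dots,n$ and vacuum in all other modes (i.e. the state $\prod_{i=1}^n a^\dagger_i|0\rangle$), heralded by a pattern in which each heralding mode that receives a photon receives exactly one, with $m$ photons in total, i.e. the pattern $(1,1,\dots,1)$ on $m$ heralding modes, any further heralding modes being heralded on vacuum. Consequently, if $Q$ cannot be generated from $\prod_{i=1}^n a^\dagger_i|0\rangle$ with the single-photon heralding pattern $(1,\dots,1)$ on $m$ modes (together with arbitrary vacuum heralding), then $Q$ cannot be generated from any $n$-photon multi-mode Fock input with any heralding pattern containing $m$ photons.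
   Context: Heralded linear-optical state generation model. Multi-mode states with a fixed photon number are represented as homogeneous polynomials in commuting variables $a^\dagger_1,\dots,a^\dagger_N$ (creation operators) applied to the vacuum $|0\rangle$. Given $N$ modes, an arbitrary complex $N\times N$ matrix $A$ (not required to be unitary; unitarity can be recovered by rescaling and embedding in a larger mode space), and a Fock input $\prod_{i=1}^N \frac{1}{\sqrt{n_i!}}(a^\dagger_{i,\mathrm{in}})^{n_i}|0\rangle$ with $n=\sum_i n_i$ photons, the output is $F(a^\dagger_1,\dots,a^\dagger_N)|0\rangle$ with $F=\prod_{i=1}^N\frac{1}{\sqrt{n_i!}}\big(\sum_{j=1}^N A_{i,j}a^\dagger_j\big)^{n_i}$. Heralding the last $M$ modes on the photon-number pattern $(m_1,\dots,m_M)$ (entries $\ge 0$; a $0$ entry means heralding on vacuum), $m=\sum_j m_j$, produces the unnormalised state $G(a^\dagger_1,\dots,a^\dagger_{N-M})|0\rangle$ with $G=\frac{1}{\prod_j m_j!}\,\frac{\partial^{m} F}{\partial (a^\dagger_{N-M+1})^{m_1}\cdots\partial (a^\dagger_{N})^{m_M}}\Big|_{a^\dagger_{N-M+1}=\cdots=a^\dagger_N=0}$. A target state $Q$ on $N_T\le N-M$ modes is regarded as a polynomial in $a^\dagger_1,\dots,a^\dagger_{N-M}$ (modes $N_T+1,\dots,N-M$ in vacuum). The target $Q$ can be generated from the given input and heralding pattern if there exist a complex $N\times N$ matrix $A$ and $\gamma\in\mathbb{C}$ with $\gamma G=Q$ as polynomials (this forces the heralding amplitude $1/\gamma$ to be nonzero).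 *)

(* Defs.v *)
From mathcomp Require Import all_boot all_algebra.
From mathcomp Require Import mpoly complex.
From mathcomp Require Import reals.

Set Implicit Arguments.
Unset Strict Implicit.
Unset Printing Implicit Defensive.

Import GRing.Theory Num.Theory.
Local Open Scope ring_scope.

Section LinearOpticsModel.
Variable C : numClosedFieldType.

Definition homog_deg {k : nat} (d : nat) (p : {mpoly C[k]}) : Prop :=
  forall mo, mo \in msupp p -> mdeg mo = d.

(* Output polynomial F for N modes, matrix A and Fock input occupation ns:
   F = prod_i 1/sqrt(n_i!) (sum_j A_ij a_j^dagger)^(n_i). *)
Definition out_poly (N : nat) (A : 'M[C]_N) (ns : 'I_N -> nat) : {mpoly C[N]} :=
  \prod_(i < N)
     ((sqrtC ((ns i)`!%:R : C))^-1
        *: (\sum_(j < N) A i j *: 'X_j) ^+ ns i).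

(* Modes are 'I_(K + M): the first K (lshift) are kept, the last M (rshift)
   are heralded.  Multi-index of the derivative d^{m_1}..d^{m_M}. *)
Definition herald_multinom (K M : nat) (ms : 'I_M -> nat) : 'X_{1..K + M} :=
  [multinom (match split i with inl _ => 0%N | inr j => ms j end)
    | i < K + M].

Definition herald_subst (K M : nat) : (K + M).-tuple {mpoly C[K]} :=
  [tuple (match split i with inl k => 'X_k | inr _ => 0 end) | i < K + M].

Definition herald_poly (K M : nat) (A : 'M[C]_(K + M))
    (ns : 'I_(K + M) -> nat) (ms : 'I_M -> nat) : {mpoly C[K]} :=
  (\prod_(j < M) ((ms j)`!%:R : C))^-1
    *: comp_mpoly (@herald_subst K M)
         (mderivm (@herald_multinom K M ms) (out_poly A ns)).

(* A target on NT modes regarded as a polynomial in K >= NT variables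
   (modes NT+1..K in vacuum). *)
Definition embed_target (NT K : nat) (Q : {mpoly C[NT]}) : {mpoly C[K]} :=
  comp_mpoly
    [tuple (match insub (nat_of_ord i) : option 'I_K with
            | Some k => 'X_k | None => 0 end) | i < NT] Q.

Definition generable (NT K M : nat) (Q : {mpoly C[NT]})
    (ns : 'I_(K + M) -> nat) (ms : 'I_M -> nat) : Prop :=
  (NT <= K)%N /\
  exists (A : 'M[C]_(K + M)) (gamma : C),
    gamma *: herald_poly A ns ms = embed_target K Q.

End LinearOpticsModel.

Definition single_photon_input (n N : nat) : 'I_N -> nat :=
  fun i => if (nat_of_ord i < n)%N then 1%N else 0%N.

Arguments single_photon_input n N i : clear implicits.

(* Main.v *)
Require Import Defs.
From mathcomp Require Import all_boot all_algebra.
From mathcomp Require Import mpoly complex.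
From mathcomp Require Import reals.

Set Implicit Arguments.
Unset Strict Implicit.
Unset Printing Implicit Defensive.
Import GRing.Theory Num.Theory.
Local Open Scope ring_scope.

Lemma mpoly_ind0 n (R : comNzRingType) (P : {mpoly R[n]} -> Prop) :
  (forall c, P c%:MP) -> (forall i, P 'X_i) ->
  (forall p q, P p -> P q -> P (p + q)) ->
  (forall p q, P p -> P q -> P (p * q)) -> forall p, P p.
Proof.
move=> PC PX PD PM p; rewrite (mpolyE p).
apply: (big_ind P) => //; first by rewrite -mpolyC0; apply PC.
move=> m _; rewrite -mul_mpolyC; apply: (PM) => //.
rewrite mpolyXE_id; apply: (big_ind P) => //; first by rewrite -mpolyC1.
move=> i _; elim: (m i) => [|k IH]; first by rewrite expr0 -mpolyC1.
by rewrite exprS; apply: (PM).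
Qed.

Definition lin_tuple n k (R : comNzRingType) (T : 'M[R]_(n,k)) : n.-tuple {mpoly R[k]} :=
  [tuple \sum_(j < k) T i j *: 'X_j | i < n].

Lemma comp_X n k (R : comNzRingType) (lq : n.-tuple {mpoly R[k]}) i :
  'X_i \mPo lq = tnth lq i.
Proof. by rewrite comp_mpolyXU -tnth_nth. Qed.

Lemma mderivXU n (R : comNzRingType) (i j : 'I_n) :
  mderiv j ('X_i : {mpoly R[n]}) = ((i == j)%:R : R)%:MP.
Proof.
rewrite mderivX mnm1E; case: eqP => [->|_].
  have -> : (U_(j) - U_(j))%MM = 0%MM by apply/mnmP=> a; rewrite !mnmE subnn.
  by rewrite mpolyX0 scale1r mpolyC1.
by rewrite scale0r mpolyC0.
Qed.

Lemma chain n k (R : comNzRingType) (T : 'M[R]_(n,k)) (j : 'I_k) p :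
  mderiv j (p \mPo lin_tuple T) = \sum_(a < n) T a j *: (mderiv a p \mPo lin_tuple T).
Proof.
elim/mpoly_ind0: p.
- move=> c; rewrite comp_mpolyC mderivC big1 // => a _.
  by rewrite mderivC comp_mpoly0 scaler0.
- move=> i; rewrite comp_X tnth_mktuple linear_sum /=.
  rewrite (bigD1 j) //= big1 => [|j' /negbTE nj]; last first.
    by rewrite mderivZ mderivXU nj mpolyC0 scaler0.
  rewrite (bigD1 i) //= big1 => [|a /negbTE na]; last first.
    by rewrite mderivXU eq_sym na mpolyC0 comp_mpoly0 scaler0.
  by rewrite !addr0 mderivZ !mderivXU !eqxx comp_mpolyC.
- move=> p q Hp Hq; rewrite !comp_mpolyD mderivD Hp Hq -big_split /=.
  by apply: eq_bigr => a _; rewrite mderivD comp_mpolyD scalerDr.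
- move=> p q Hp Hq; rewrite rmorphM mderivM Hp Hq mulr_suml mulr_sumr -big_split /=.
  apply: eq_bigr => a _; rewrite mderivM comp_mpolyD !rmorphM scalerDr.
  by rewrite scalerAl scalerAr.
Qed.

Lemma comp_comp n k l (R : comNzRingType) (lq : n.-tuple {mpoly R[k]})
   (lp : k.-tuple {mpoly R[l]}) p :
 (p \mPo lq) \mPo lp = p \mPo [tuple (tnth lq i \mPo lp) | i < n].
Proof.
elim/mpoly_ind0: p.
- by move=> c; rewrite !comp_mpolyC.
- by move=> i; rewrite !comp_X tnth_mktuple.
- by move=> p q Hp Hq; rewrite !comp_mpolyD Hp Hq.
- by move=> p q Hp Hq; rewrite !rmorphM; congr (_ * _); [exact: Hp | exact: Hq].
Qed.

Lemma derivs_comp N N' (R : comNzRingType) (lq : N.-tuple {mpoly R[N']})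
  (r : seq ('I_N' * 'I_N)) :
  (forall pr, pr \in r -> forall p, mderiv pr.1 (p \mPo lq) = mderiv pr.2 p \mPo lq) ->
  forall p, mderivm (\sum_(pr <- r) U_(pr.1))%MM (p \mPo lq)
          = mderivm (\sum_(pr <- r) U_(pr.2))%MM p \mPo lq.
Proof.
elim: r => [|pr r IH] H p; first by rewrite !big_nil !mderivm0m.
rewrite !big_cons !mderivmDm !mderivmU1m H ?mem_head // IH // => pr' Hpr'.
by apply: H; rewrite in_cons Hpr' orbT.
Qed.

Lemma splitL m n (k : 'I_m) : split (lshift n k) = inl k.
Proof. by rewrite -[lshift n k]/(unsplit (inl k)) unsplitK. Qed.

Lemma splitR m n (k : 'I_n) : split (rshift m k) = inr k.
Proof. by rewrite -[rshift m k]/(unsplit (inr k)) unsplitK. Qed.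

Lemma lr_neq m n (k : 'I_m) (j : 'I_n) : (lshift n k == rshift m j) = false.
Proof.
apply/negbTE; rewrite -val_eqE /= neq_ltn; apply/orP; left.
exact: ltn_addr (ltn_ord k).
Qed.

Lemma rr_eq m n (k j : 'I_n) : (rshift m k == rshift m j) = (k == j).
Proof. exact: (inj_eq (@rshift_inj m n)). Qed.

Lemma ll_eq m n (k j : 'I_m) : (lshift n k == lshift n j) = (k == j).
Proof. exact: (inj_eq (@lshift_inj m n)). Qed.

Definition flat N (f : 'I_N -> nat) : seq 'I_N :=
  flatten [seq nseq (f a) a | a <- index_enum 'I_N].

Lemma size_flat N (f : 'I_N -> nat) : size (flat f) = (\sum_a f a)%N.
Proof.
rewrite /flat size_flatten /shape -map_comp sumnE big_map.
by apply: eq_bigr => a _; rewrite /= size_nseq.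
Qed.

Lemma sum_flat N (f : 'I_N -> nat) (F : 'I_N -> nat) :
  (\sum_(x <- flat f) F x = \sum_a F a * f a)%N.
Proof.
rewrite /flat big_flatten big_map; apply: eq_bigr => a _.
rewrite big_nseq; elim: (f a) => [|k IH] /=; first by rewrite muln0.
by rewrite IH mulnS.
Qed.

Lemma prod_flat (R : comNzRingType) N (f : 'I_N -> nat) (F : 'I_N -> R) :
  \prod_(x <- flat f) F x = \prod_a F a ^+ f a.
Proof.
rewrite /flat big_flatten big_map; apply: eq_bigr => a _.
rewrite big_nseq; elim: (f a) => [|k IH] /=; first by rewrite expr0.
by rewrite IH exprS.
Qed.

Lemma sum_eq_ord N (j : nat) : (\sum_(u < N) (u == j :> nat) = (j < N))%N.
Proof.
elim: N => [|N IH]; first by rewrite big_ord0.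
rewrite big_ord_recr /= IH.
case: (ltngtP j N) => [h|h|->] /=.
- by rewrite addn0 ltnS ltnW.
- by rewrite ltnS leqNgt h.
- by rewrite ?ltnn ?eqxx ?ltnSn.
Qed.

Definition Tmat (C : nzRingType) K M M' (t : seq 'I_M) : 'M[C]_(K+M, K+M') :=
  \matrix_(a, j) match split a, split j with
    | inl k, inl k' => (k == k')%:R
    | inr h, inr j0 => ((j0 < size t)%N && (nth h t j0 == h))%:R
    | _, _ => 0 end.

Lemma T_rsh (C : nzRingType) K M M' (t : seq 'I_M) (Hle : (size t <= M')%N)
  (u : 'I_(size t)) (a : 'I_(K+M)) :
  Tmat C K M' t a (rshift K (widen_ord Hle u)) = (a == rshift K (tnth (in_tuple t) u))%:R.
Proof.
rewrite mxE splitR -[a](splitK); case: (split a) => [k|h] /=.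
  by rewrite splitL lr_neq.
rewrite splitR rr_eq ltn_ord /= (tnth_nth h) /= eq_sym.
done.
Qed.

Lemma main1 (C : numClosedFieldType) (n m NT : nat) (Q : {mpoly C[NT]})
  (K M : nat) (ns : 'I_(K + M) -> nat) (ms : 'I_M -> nat) :
  (1 <= NT)%N ->
  (\sum_(i < K + M) ns i)%N = n -> (\sum_(j < M) ms j)%N = m ->
  generable Q ns ms ->
  exists (K' M' : nat) (ms' : 'I_M' -> nat),
     (n <= K' + M')%N /\ (forall j, ms' j <= 1)%N /\
     (\sum_(j < M') ms' j)%N = m /\
     generable Q (single_photon_input n (K' + M')) ms'.
Proof.
move=> HNT1 Hn Hm [HNT [A [gamma Hg]]].
have K0 : (0 < K)%N by apply: leq_trans HNT.
pose x0 : 'I_(K+M) := lshift M (Ordinal K0).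
pose s := flat ns; pose t := flat ms.
have Hs : size s = n by rewrite size_flat.
have Ht : size t = m by rewrite size_flat.
have Hle : (size t <= m + n)%N by rewrite Ht leq_addr.
pose ms' := fun j : 'I_(m + n) => (j < m)%N.
exists K, (m + n)%N, ms'.
split; first by apply: leq_trans (leq_addl m n) (leq_addl K _).
split; first by move=> j; apply: leq_b1.
split.
  rewrite big_split_ord /= [X in (_ + X)%N]big1 ?addn0 => [|j _]; last first.
    by rewrite /ms' /= ltnNge leq_addr.
  rewrite (eq_bigr (fun _ => 1%N)) ?sum1_card ?card_ord // => j _.
  by rewrite /ms' /= ltn_ord.
split; first exact: HNT.
pose T := Tmat C K (m + n) t.
pose A' : 'M[C]_(K + (m + n)) :=
  \matrix_(i', j') (if (i' < size s)%N then (A *m T) (nth x0 s i') j' else 0).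
pose tau := lin_tuple T.
pose P := \prod_(a < K + M) (\sum_(j < K + M) A a j *: 'X_j) ^+ ns a.
pose c1 := \prod_(a < K + M) (sqrtC ((ns a)`!%:R : C))^-1.
pose r := [seq (rshift K (widen_ord Hle u), rshift K (tnth (in_tuple t) u)) | u <- index_enum 'I_(size t)].
have HL : forall a, (\sum_(j < K + M) A a j *: 'X_j) \mPo tau
                   = \sum_(j' < K + (m + n)) (A *m T) a j' *: 'X_j'.
  move=> a; rewrite linear_sum /=.
  under eq_bigr do rewrite comp_mpolyZ comp_X tnth_mktuple scaler_sumr.
  rewrite exchange_big; apply: eq_bigr => j' _; rewrite mxE scaler_suml.
  by apply: eq_bigr => j _; rewrite scalerA.
have Hout : out_poly A ns = c1 *: P.
  by rewrite /out_poly scaler_prod.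
have Hout' : out_poly A' (single_photon_input n (K + (m + n))) = P \mPo tau.
  pose F a := \sum_(j' < K + (m + n)) (A *m T) a j' *: 'X_j'.
  pose H (k : nat) := if (k < n)%N then F (nth x0 s k) else 1.
  transitivity (\prod_(i' < K + (m + n)) H i').
    apply: eq_bigr => i' _; rewrite /single_photon_input /H.
    case: ifP => Hi /=.
      rewrite sqrtC1 invr1 scale1r expr1; apply: eq_bigr => j' _.
      by rewrite mxE Hs Hi.
    by rewrite expr0 sqrtC1 invr1 scale1r.
  have Hn' : (n <= K + (m + n))%N by apply: leq_trans (leq_addl m n) (leq_addl K _).
  rewrite -(big_mkord xpredT H) (big_cat_nat (leq0n n) Hn') /=.
  rewrite [X in _ * X]big_nat_cond [X in _ * X]big1 ?mulr1 => [|k]; last first.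
    by rewrite /H andbT => /andP [Hk _]; rewrite ltnNge Hk.
  rewrite rmorph_prod /=.
  under [RHS]eq_bigr do rewrite rmorphXn /= HL.
  rewrite -(prod_flat ns F) -/s (big_nth x0) Hs.
  by apply: eq_big_nat => k /andP [_ Hk]; rewrite /H Hk.
have Hd : herald_multinom K ms = (\sum_(pr <- r) U_(pr.2))%MM.
  apply/mnmP => z; rewrite mnmE mnm_sumE big_map.
  have -> : (\sum_(u <- index_enum 'I_(size t)) U_(rshift K (tnth (in_tuple t) u))%MM z)%N
          = (\sum_(x <- t) (rshift K x == z))%N.
    rewrite [RHS](big_tuple _ _ (in_tuple t)) /=; apply: eq_bigr => u _; by rewrite mnm1E.
  rewrite /t sum_flat -[z](splitK); case: (split z) => [k|h] /=; rewrite ?splitL ?splitR.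
    by rewrite big1 // => a _; rewrite eq_sym lr_neq.
  rewrite (bigD1 h) //= rr_eq eqxx mul1n big1 ?addn0 // => a /negbTE na.
  by rewrite rr_eq na.
have Hd' : herald_multinom K ms' = (\sum_(pr <- r) U_(pr.1))%MM.
  apply/mnmP => z; rewrite mnmE mnm_sumE big_map.
  rewrite -[z](splitK); case: (split z) => [k|j] /=; rewrite ?splitL ?splitR.
    by rewrite big1 // => u _; rewrite mnm1E eq_sym lr_neq.
  under eq_bigr do rewrite mnm1E rr_eq -val_eqE /=.
  by rewrite /ms' sum_eq_ord Ht.
have Hr : forall pr, pr \in r -> forall p, mderiv pr.1 (p \mPo tau) = mderiv pr.2 p \mPo tau.
  move=> pr /mapP [u _ ->] p /=; rewrite chain (bigD1 (rshift K (tnth (in_tuple t) u))) //=.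
  rewrite big1 ?addr0 => [|a /negbTE na]; last by rewrite /T T_rsh na scale0r.
  by rewrite /T T_rsh eqxx scale1r.
have Hsig : [tuple (tnth tau i \mPo herald_subst C K (m + n)) | i < K + M] = herald_subst C K M.
  apply: eq_from_tnth => a; rewrite !tnth_mktuple linear_sum big_split_ord /=.
  rewrite -[a](splitK); case: (split a) => [k|h] /=; rewrite ?splitL ?splitR.
    rewrite [X in _ + X]big1 ?addr0 => [|j _]; last first.
      by rewrite comp_mpolyZ /T mxE splitL splitR scale0r.
    rewrite (bigD1 k) //= big1 ?addr0 => [|k' /negbTE nk]; last first.
      by rewrite comp_mpolyZ /T mxE !splitL eq_sym nk scale0r.
    by rewrite comp_mpolyZ /T mxE !splitL eqxx scale1r comp_X tnth_mktuple splitL.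
  rewrite big1 ?add0r => [|k _]; last first.
    by rewrite comp_mpolyZ /T mxE splitL splitR scale0r.
  rewrite big1 // => j _.
  by rewrite comp_mpolyZ comp_X tnth_mktuple splitR scaler0.
have Hmain : herald_poly A ns ms =
   ((\prod_(j < M) ((ms j)`!%:R : C))^-1 * c1) *: herald_poly A' (single_photon_input n (K + (m + n))) ms'.
  rewrite /herald_poly Hout' Hd' derivs_comp // comp_comp Hsig -Hd.
  have H1 : \prod_(j < m + n) ((ms' j)`!%:R : C) = 1.
    by rewrite big1 // => j _; rewrite /ms'; case: (j < m)%N.
  rewrite H1 invr1 scale1r.
  by rewrite Hout mderivmZ comp_mpolyZ scalerA.
exists A', (gamma * ((\prod_(j < M) ((ms j)`!%:R : C))^-1 * c1)).
by rewrite -scalerA -Hmain.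
Qed.

Theorem lemma1 (R : realType) (n m NT : nat) (Q : {mpoly R[i][NT]}) :
  (m <= n)%N -> (1 <= NT)%N -> Q != 0 -> homog_deg (n - m)%N Q ->
  (* main statement *)
  ((exists (K M : nat) (ns : 'I_(K + M) -> nat) (ms : 'I_M -> nat),
       (\sum_(i < K + M) ns i)%N = n /\ (\sum_(j < M) ms j)%N = m /\
       generable Q ns ms) ->
   exists (K' M' : nat) (ms' : 'I_M' -> nat),
     (n <= K' + M')%N /\ (forall j, ms' j <= 1)%N /\
     (\sum_(j < M') ms' j)%N = m /\
     generable Q (single_photon_input n (K' + M')) ms')
  /\
  (* consequence *)
  ((forall (K' M' : nat) (ms' : 'I_M' -> nat),
       (n <= K' + M')%N -> (forall j, ms' j <= 1)%N ->
       (\sum_(j < M') ms' j)%N = m ->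
       ~ generable Q (single_photon_input n (K' + M')) ms') ->
   forall (K M : nat) (ns : 'I_(K + M) -> nat) (ms : 'I_M -> nat),
     (\sum_(i < K + M) ns i)%N = n -> (\sum_(j < M) ms j)%N = m ->
     ~ generable Q ns ms).
Proof.
move=> Hmn HNT HQ Hhom.
have part1 : (exists (K M : nat) (ns : 'I_(K + M) -> nat) (ms : 'I_M -> nat),
       (\sum_(i < K + M) ns i)%N = n /\ (\sum_(j < M) ms j)%N = m /\
       generable Q ns ms) ->
   exists (K' M' : nat) (ms' : 'I_M' -> nat),
     (n <= K' + M')%N /\ (forall j, ms' j <= 1)%N /\
     (\sum_(j < M') ms' j)%N = m /\
     generable Q (single_photon_input n (K' + M')) ms'.
  by move=> [K [M [ns [ms [Hn [Hm Hg]]]]]]; exact: (main1 HNT Hn Hm Hg).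
split; first exact: part1.
move=> Hno K M ns ms Hn Hm Hg.
have [K' [M' [ms' [H1 [H2 [H3 H4]]]]]] := part1 (ex_intro _ K (ex_intro _ M (ex_intro _ ns (ex_intro _ ms (conj Hn (conj Hm Hg)))))).
exact: (Hno K' M' ms' H1 H2 H3 H4).
Qed.
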